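(* Let $L\subseteq G_3$ be the subgroup of elements that fix every edge sticker and send every corner cubelet back to its own position, and let $K=\ker\phi\subseteq G_2$. Then $\psi$ restricts to an isomorphism $L\to K$.
   Context: The $3\times3\times3$ Rubik's cube consists of 8 corner cubelets (3 stickers each), 12 edge cubelets (2 stickers each) and 6 face-center cubelets. $G_3$ is the group of permutations of the 48 corner and edge stickers generated by the six moves $u_3,d_3,f_3,b_3,l_3,r_3$ rotating respectively the top, bottom, front, back, left, right layer of nine cubelets by $90^\circ$ clockwise as seen from outside facing that face. $G_2$ is the analogous group for the $2\times2\times2$ cube (8 corner cubelets, 24 stickers) with generators $u_2,\dots,r_2$; $\psi:G_3\to G_2$ is the homomorphism with $u_3\mapsto u_2$, $d_3\mapsto d_2$, etc. (recording the action on corner stickers), and $\phi:G_2\to S_8$ records the permutation of the 8 corner positions. *)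

(* Defs.v *)
From HB Require Import structures.
From mathcomp Require Import all_boot all_order all_algebra all_fingroup.
Set Implicit Arguments. Unset Strict Implicit. Unset Printing Implicit Defensive.
Import Order.TTheory GRing.Theory Num.Theory.
Local Open Scope ring_scope.

(* Coordinates: x = right(+)/left(-), y = up(+)/down(-), z = front(+)/back(-)
   (a right-handed frame).  A coordinate in {-1,0,1} is encoded by i : 'I_3
   with value i - 1. *)
Definition c2z (i : 'I_3) : int := (i : nat)%:Z - 1.
Definition z2c (z : int) : 'I_3 :=
  if z == -1 then @Ordinal 3 0 isT else if z == 0 then @Ordinal 3 1 isT
  else @Ordinal 3 2 isT.

Definition vec := ('I_3 * 'I_3 * 'I_3)%type.
Definition ivec := (int * int * int)%type.
Definition toZ (v : vec) : ivec := (c2z v.1.1, c2z v.1.2, c2z v.2).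
Definition ofZ (w : ivec) : vec := (z2c w.1.1, z2c w.1.2, z2c w.2).

Definition dotZ (a b : ivec) : int := a.1.1 * b.1.1 + a.1.2 * b.1.2 + a.2 * b.2.
Definition crossZ (a b : ivec) : ivec :=
  (a.1.2 * b.2 - a.2 * b.1.2, a.2 * b.1.1 - a.1.1 * b.2, a.1.1 * b.1.2 - a.1.2 * b.1.1).
(* Rotation by -90 degrees about the unit vector n, i.e. a quarter turn
   clockwise as seen from the tip of n (from outside the face with outward
   normal n):  v |-> (n.v) n - n x v. *)
Definition rotZ (n v : ivec) : ivec :=
  let k := dotZ n v in let c := crossZ n v in
  (k * n.1.1 - c.1.1, k * n.1.2 - c.1.2, k * n.2 - c.2).

Definition nzeros (p : ivec) : nat := ((p.1.1 == 0) + (p.1.2 == 0) + (p.2 == 0))%N.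

(* A sticker is a pair (p, d): cubelet position p and outward unit normal d
   of the face carrying the sticker; p . d = 1 means the sticker lies on the
   outer face with normal d.  Centers (two zero coordinates) are excluded. *)
Definition valid3 (x : vec * vec) : bool :=
  [&& dotZ (toZ x.2) (toZ x.2) == 1, dotZ (toZ x.1) (toZ x.2) == 1
    & (nzeros (toZ x.1) <= 1)%N].
Definition corner (x : vec * vec) : bool := nzeros (toZ x.1) == 0%N.
Definition valid2 (x : vec * vec) : bool := valid3 x && corner x.

Definition S3 := {x : vec * vec | valid3 x}.
Definition S2 := {x : vec * vec | valid2 x}.
HB.instance Definition _ := Finite.on S3.
HB.instance Definition _ := Finite.on S2.

Lemma valid2_3 x : valid2 x -> valid3 x. Proof. by case/andP. Qed.
Definition emb (s : S2) : S3 := exist _ (val s) (valid2_3 (valP s)).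

Definition turn (n : ivec) (x : vec * vec) : vec * vec :=
  if dotZ (toZ x.1) n == 1 then (ofZ (rotZ n (toZ x.1)), ofZ (rotZ n (toZ x.2)))
  else x.

Definition mv3 (n : ivec) (s : S3) : S3 := insubd s (turn n (val s)).
Definition mv2 (n : ivec) (s : S2) : S2 := insubd s (turn n (val s)).
(* (the functions are bijective, so insubd below returns the permutation) *)
Definition move3 (n : ivec) : {perm S3} := insubd (1%g : {perm S3}) [ffun s : S3 => mv3 n s].
Definition move2 (n : ivec) : {perm S2} := insubd (1%g : {perm S2}) [ffun s : S2 => mv2 n s].

Definition nU : ivec := (0, 1, 0).
Definition nD : ivec := (0, -1, 0).
Definition nF : ivec := (0, 0, 1).
Definition nB : ivec := (0, 0, -1).
Definition nL : ivec := (-1, 0, 0).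
Definition nR : ivec := (1, 0, 0).

Definition G3 : {set {perm S3}} :=
  <<[set move3 nU; move3 nD; move3 nF; move3 nB; move3 nL; move3 nR]>>%g.
Definition G2 : {set {perm S2}} :=
  <<[set move2 nU; move2 nD; move2 nF; move2 nB; move2 nL; move2 nR]>>%g.

Definition psi_fun (g : {perm S3}) (s : S2) : S2 := insubd s (val (g (emb s))).
Definition psi (g : {perm S3}) : {perm S2} := insubd (1%g : {perm S2}) [ffun s : S2 => psi_fun g s].

Definition CornerPos := {p : vec | nzeros (toZ p) == 0%N}.
HB.instance Definition _ := Finite.on CornerPos.
Definition pos2 (s : S2) : vec := (val s).1.
Definition pos3 (s : S3) : vec := (val s).1.
Definition phi_fun (h : {perm S2}) (c : CornerPos) : CornerPos :=
  if [pick s : S2 | pos2 s == val c] is Some s then insubd c (pos2 (h s)) else c.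
Definition phi (h : {perm S2}) : {perm CornerPos} := insubd (1%g : {perm CornerPos}) [ffun c : CornerPos => phi_fun h c].

Definition Lsub : {set {perm S3}} :=
  [set g in G3 | [forall s : S3, ~~ corner (val s) ==> (g s == s)]
              && [forall s : S3, corner (val s) ==> (pos3 (g s) == pos3 s)]].
Definition Kker : {set {perm S2}} := [set h in G2 | phi h == 1%g].

(* Main.v *)
Require Import Defs.
From mathcomp Require Import all_boot all_algebra all_fingroup zify.
Set Implicit Arguments. Unset Strict Implicit. Unset Printing Implicit Defensive.
Import GRing.Theory.

Definition o0 : 'I_3 := @Ordinal 3 0 isT.
Definition o1 : 'I_3 := @Ordinal 3 1 isT.
Definition o2 : 'I_3 := @Ordinal 3 2 isT.
Definition ordl := [:: o0; o1; o2].
Lemma ordlP (i : 'I_3) : i \in ordl.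
Proof.
case: i => [[|[|[|n]]] Hi].
- by rewrite inE; apply/orP; left; apply/eqP/val_inj.
- by rewrite !inE; apply/orP; right; apply/orP; left; apply/eqP/val_inj.
- by rewrite !inE; apply/orP; right; apply/orP; right; apply/eqP/val_inj.
- by [].
Qed.

Definition allraw : seq (vec * vec) :=
  flatten (map (fun a => flatten (map (fun b => flatten (map (fun c =>
  flatten (map (fun d => flatten (map (fun e => map (fun f =>
   ((a,b,c),(d,e,f))) ordl) ordl)) ordl)) ordl)) ordl)) ordl).
Lemma allrawP x : x \in allraw.
Proof.
case: x => [[[a b] c] [[d e] f]].
by rewrite /allraw; do 5 (apply/flatten_mapP; eexists; [exact: ordlP|]);
  apply/mapP; eexists; [exact: ordlP|].
Qed.
Lemma chkP (P : pred (vec * vec)) : all P allraw -> forall x, P x.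
Proof. by move/allP => H x; apply: H; apply: allrawP. Qed.

Definition V2 := filter valid2 allraw.
Lemma V2P x : valid2 x -> x \in V2.
Proof. by move=> H; rewrite mem_filter H allrawP. Qed.
Definition V3 := filter valid3 allraw.
Lemma V3P x : valid3 x -> x \in V3.
Proof. by move=> H; rewrite mem_filter H allrawP. Qed.

Definition evenp (p : vec) : bool := ~~ odd ((p.1.1 == o0) + (p.1.2 == o0) + (p.2 == o0)).
Definition dX (p : vec) : vec := (p.1.1, o1, o1).
Definition dY (p : vec) : vec := (o1, p.1.2, o1).
Definition dZ (p : vec) : vec := (o1, o1, p.2).
Definition nextr (x : vec * vec) : vec * vec :=
  let p := x.1 in let d := x.2 in
  if d.1.1 != o1 then (p, if evenp p then dY p else dZ p)
  else if d.1.2 != o1 then (p, if evenp p then dZ p else dX p)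
  else (p, if evenp p then dX p else dY p).
Definition labr (x : vec * vec) : 'Z_3 :=
  let p := x.1 in let d := x.2 in
  if d.1.2 != o1 then 0%R else if d.1.1 != o1 then (if evenp p then 2%R else 1%R)
  else (if evenp p then 1%R else 2%R).

Definition normals : seq ivec := [:: nU; nD; nF; nB; nL; nR].
Definition rawapply (w : seq ivec) (x : vec * vec) := foldl (fun y n => turn n y) x w.
Definition alist : seq (vec * vec) := [:: ((o0,o0,o0),(o1,o0,o1)); ((o0,o0,o2),(o1,o0,o1)); ((o0,o2,o0),(o1,o2,o1)); ((o0,o2,o2),(o1,o2,o1)); ((o2,o0,o0),(o1,o0,o1)); ((o2,o0,o2),(o1,o0,o1)); ((o2,o2,o0),(o1,o2,o1)); ((o2,o2,o2),(o1,o2,o1))].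
Definition ws : seq (seq ivec) := [::
  [:: nB; nB; nU; nR; nR; nR; nD; nD; nD; nR; nD; nR; nR; nR; nD; nD; nD; nR; nD; nU; nU; nU; nD; nD; nD; nR; nR; nR; nD; nR; nD; nD; nD; nR; nR; nR; nD; nR; nB; nB];
  [:: nR; nD; nR; nR; nR; nD; nD; nD; nR; nD; nU; nD; nD; nD; nR; nR; nR; nD; nR; nD; nD; nD; nR; nR; nR; nD; nR; nU; nU; nU; nR; nR; nR; nD; nD; nD];
  [:: nU; nF; nU; nR; nR; nR; nD; nD; nD; nR; nD; nR; nR; nR; nD; nD; nD; nR; nD; nU; nU; nU; nD; nD; nD; nR; nR; nR; nD; nR; nD; nD; nD; nR; nR; nR; nD; nR; nF; nF; nF; nU; nU; nU];
  [:: nF; nR; nU; nR; nR; nR; nD; nD; nD; nR; nD; nR; nR; nR; nD; nD; nD; nR; nD; nU; nU; nU; nD; nD; nD; nR; nR; nR; nD; nR; nD; nD; nD; nR; nR; nR; nD; nF; nF; nF];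
  [:: nB; nU; nR; nR; nR; nD; nD; nD; nR; nD; nR; nR; nR; nD; nD; nD; nR; nD; nU; nU; nU; nD; nD; nD; nR; nR; nR; nD; nR; nD; nD; nD; nR; nR; nR; nD; nR; nB; nB; nB];
  [:: nD; nD; nD; nR; nD; nR; nR; nR; nD; nD; nD; nR; nD; nU; nD; nD; nD; nR; nR; nR; nD; nR; nD; nD; nD; nR; nR; nR; nD; nR; nU; nU; nU; nR; nR; nR];
  [:: nU; nR; nR; nR; nD; nD; nD; nR; nD; nR; nR; nR; nD; nD; nD; nR; nD; nU; nU; nU; nD; nD; nD; nR; nR; nR; nD; nR; nD; nD; nD; nR; nR; nR; nD; nR]
].
Definition expected (i k : nat) : 'Z_3 := if k == i then 1%R else if k == 7 then 2%R else 0%R.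
Definition x0 : vec * vec := ((o2,o2,o2),(o1,o2,o1)).

Lemma c_turn : all (fun n => all (fun x => valid3 (turn n x) && (corner x ==> corner (turn n x))
        && (turn n (turn n (turn n (turn n x))) == x)) V3) normals.
Proof. vm_compute. reflexivity. Qed.
Lemma c_comm : all (fun n => all (fun x => (nextr (turn n x) == turn n (nextr x))) V2) normals.
Proof. vm_compute. reflexivity. Qed.
Lemma c_D : all (fun n => (foldr (fun x acc => labr (turn n x) + acc) 0 alist == 0)%R) normals.
Proof. vm_compute. reflexivity. Qed.
Lemma c_next : all (fun x => valid2 (nextr x) && (labr (nextr x) == labr x + 1)%R
       && (iter 3 nextr x == x) && ((nextr x).1 == x.1)) V2.
Proof. vm_compute. reflexivity. Qed.
Lemma c_pos : all (fun x => all (fun y => (x.1 == y.1) ==> (y \in [:: x; nextr x; iter 2 nextr x])) V2) V2.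
Proof. vm_compute. reflexivity. Qed.
Lemma c_poslab : all (fun x => all (fun y => (x.1 == y.1) ==> (labr x == labr y) ==> (x == y)) V2) V2.
Proof. vm_compute. reflexivity. Qed.
Lemma c_A : all (fun x => (labr x == 0)%R ==> (x \in alist)) V2.
Proof. vm_compute. reflexivity. Qed.
Lemma c_alist : all (fun x => valid2 x && (labr x == 0)%R) alist && uniq alist && (size alist == 8).
Proof. vm_compute. reflexivity. Qed.
Lemma c_ws : (size ws == 7) && all (fun w => all (fun n => n \in normals) w) ws.
Proof. vm_compute. reflexivity. Qed.
Lemma c_wsL : all (fun w => all (fun x => if corner x then (rawapply w x).1 == x.1 else rawapply w x == x) V3) ws.
Proof. vm_compute. reflexivity. Qed.
Lemma c_wsC : all (fun w => all (fun x => rawapply w (nextr x) == nextr (rawapply w x)) V2) ws.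
Proof. vm_compute. reflexivity. Qed.
Lemma c_wsE : all (fun i => all (fun k => labr (rawapply (nth [::] ws i) (nth x0 alist k)) == expected i k) (iota 0 8)) (iota 0 7).
Proof. vm_compute. reflexivity. Qed.
Lemma c_corner : all (fun x => (nzeros (toZ x.1) == 0%N) ==> valid2 (x.1, dX x.1)) allraw.
Proof. vm_compute. reflexivity. Qed.

Lemma perm_insubdE (T : finType) (F : T -> T) : injective F ->
  forall x, (insubd (1%g : {perm T}) [ffun x => F x] : {perm T}) x = F x.
Proof.
move=> inj x; have H : injectiveb [ffun x => F x].
  by apply/injectiveP => a b; rewrite !ffunE; apply: inj.
by rewrite -pvalE insubdK // ffunE.
Qed.

Lemma mkgs (gT : finGroupType) (P : pred gT) :
  P 1%g -> (forall x y, P x -> P y -> P (x * y)%g) -> group_set [set x | P x].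
Proof.
move=> P1 PM; apply/group_setP; split; first by rewrite inE.
by move=> x y; rewrite !inE; apply: PM.
Qed.

Lemma turn_facts n x : n \in normals -> valid3 x ->
  [/\ valid3 (turn n x), corner x -> corner (turn n x) & turn n (turn n (turn n (turn n x))) = x].
Proof.
move=> Hn Hx; move/allP: c_turn => /(_ n Hn) /allP /(_ x (V3P Hx)) /andP [/andP [H1 H2] /eqP H3].
by split => // /(implyP H2).
Qed.

Lemma val_mv3 n s : n \in normals -> val (mv3 n s) = turn n (val s).
Proof. by move=> Hn; rewrite /mv3 insubdK //; case: (turn_facts Hn (valP s)). Qed.

Lemma mv3_inj n : n \in normals -> injective (mv3 n).
Proof.
move=> Hn; apply: (can_inj (g := fun s => mv3 n (mv3 n (mv3 n s)))) => s.
by apply: val_inj; rewrite !val_mv3 //; case: (turn_facts Hn (valP s)).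
Qed.

Lemma val_move3 n s : n \in normals -> val (move3 n s) = turn n (val s).
Proof. by move=> Hn; rewrite /move3 perm_insubdE ?val_mv3 //; exact: mv3_inj. Qed.

Lemma val_mv2 n s : n \in normals -> val (mv2 n s) = turn n (val s).
Proof.
move=> Hn; rewrite /mv2 insubdK //; case/andP: (valP s) => H3 Hc.
by case: (turn_facts Hn H3) => A B _; apply/andP; split; [exact: A | exact: B].
Qed.

Lemma mv2_inj n : n \in normals -> injective (mv2 n).
Proof.
move=> Hn; apply: (can_inj (g := fun s => mv2 n (mv2 n (mv2 n s)))) => s.
apply: val_inj; rewrite !val_mv2 //; case/andP: (valP s) => H3 _.
by case: (turn_facts Hn H3).
Qed.

Lemma val_move2 n s : n \in normals -> val (move2 n s) = turn n (val s).
Proof. by move=> Hn; rewrite /move2 perm_insubdE ?val_mv2 //; exact: mv2_inj. Qed.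

Definition wordperm (w : seq ivec) : {perm S3} := (\prod_(n <- w) move3 n)%g.
Lemma val_wordperm w s : all (fun n => n \in normals) w -> val (wordperm w s) = rawapply w (val s).
Proof.
elim: w s => [|n w IH] s /=; first by rewrite /wordperm big_nil perm1.
by case/andP=> Hn Hw; rewrite /wordperm big_cons permM IH // val_move3.
Qed.

Lemma move3_G3 n : n \in normals -> move3 n \in G3.
Proof.
move=> Hn; apply: mem_gen; move: Hn; rewrite !inE.
by case/orP=> [/eqP->|/orP[/eqP->|/orP[/eqP->|/orP[/eqP->|/orP[/eqP->|/eqP->]]]]];
  rewrite eqxx ?orbT ?orTb.
Qed.
Lemma move2_G2 n : n \in normals -> move2 n \in G2.
Proof.
move=> Hn; apply: mem_gen; move: Hn; rewrite !inE.
by case/orP=> [/eqP->|/orP[/eqP->|/orP[/eqP->|/orP[/eqP->|/orP[/eqP->|/eqP->]]]]];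
  rewrite eqxx ?orbT ?orTb.
Qed.

Lemma wordperm_G3 w : all (fun n => n \in normals) w -> wordperm w \in G3.
Proof.
move/allP=> Hw; rewrite /wordperm big_seq; apply: group_prod => n Hn.
exact: move3_G3 (Hw n Hn).
Qed.

Definition C3p (g : {perm S3}) := [forall s, corner (val s) ==> corner (val (g s))].

Lemma C3p1 : C3p 1%g.
Proof. by apply/forallP => s; rewrite perm1 implybb. Qed.
Lemma C3pM g h : C3p g -> C3p h -> C3p (g * h)%g.
Proof.
move=> /forallP Hg /forallP Hh; apply/forallP => s; rewrite permM; apply/implyP => Hs.
exact: (implyP (Hh _)) (implyP (Hg _) Hs).
Qed.

Lemma psi_fun_val g s : C3p g -> val (psi_fun g s) = val (g (emb s)).
Proof.
move=> /forallP /(_ (emb s)) /implyP H; rewrite /psi_fun insubdK //.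
apply/andP; split; first exact: (valP (g (emb s))).
by apply: H; case/andP: (valP s).
Qed.

Lemma val_psi g s : C3p g -> val (psi g s) = val (g (emb s)).
Proof.
move=> Hg; rewrite /psi perm_insubdE ?psi_fun_val //.
move=> a b /(congr1 val); rewrite !psi_fun_val // => /val_inj /perm_inj /(congr1 val) /= H.
exact: val_inj.
Qed.

Lemma psiM g h : C3p g -> C3p h -> psi (g * h)%g = (psi g * psi h)%g.
Proof.
move=> Hg Hh; apply/permP => s; apply: val_inj.
rewrite permM val_psi ?C3pM // val_psi // permM.
have -> : emb (psi g s) = g (emb s) by apply: val_inj; rewrite /= val_psi.
done.
Qed.

Lemma psi1 : psi 1%g = 1%g.
Proof. by apply/permP => s; apply: val_inj; rewrite val_psi ?C3p1 // !perm1. Qed.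

Lemma psiX g k : C3p g -> psi (g ^+ k)%g = (psi g ^+ k)%g.
Proof.
move=> Hg; elim: k => [|k IH]; first by rewrite !expg0 psi1.
have Hk : C3p (g ^+ k)%g.
  by elim: (k) => [|m IHm]; [rewrite expg0 C3p1 | rewrite expgSr C3pM].
by rewrite !expgSr psiM // IH.
Qed.

Definition Mp (g : {perm S3}) := C3p g && (psi g \in G2).
Lemma Mgs : group_set [set g | Mp g].
Proof.
apply: mkgs; first by rewrite /Mp C3p1 psi1 group1.
move=> x y /andP [Cx Gx] /andP [Cy Gy]; rewrite /Mp C3pM // psiM // groupM //.
Qed.
Definition Mg := Group Mgs.

Lemma psi_move3 n : n \in normals -> psi (move3 n) = move2 n.
Proof.
move=> Hn; have HC : C3p (move3 n).
  apply/forallP => s; apply/implyP; rewrite val_move3 //.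
  by case: (turn_facts Hn (valP s)).
by apply/permP => s; apply: val_inj; rewrite val_psi // val_move3 // val_move2.
Qed.

Lemma G3_M : G3 \subset Mg.
Proof.
rewrite /G3 gen_subG; apply/subsetP => x; rewrite !inE -!orbA.
have H : forall n, n \in normals -> Mp (move3 n).
  move=> n Hn; rewrite /Mp psi_move3 // move2_G2 // andbT.
  apply/forallP => s; apply/implyP; rewrite val_move3 //.
  by case: (turn_facts Hn (valP s)).
by case/orP=> [/eqP->|/orP[/eqP->|/orP[/eqP->|/orP[/eqP->|/orP[/eqP->|/eqP->]]]]];
  apply: H; rewrite !inE eqxx ?orbT.
Qed.

Lemma G3_C3 g : g \in G3 -> C3p g.
Proof. by move/(subsetP G3_M); rewrite inE => /andP []. Qed.
Lemma G3_psi g : g \in G3 -> psi g \in G2.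
Proof. by move/(subsetP G3_M); rewrite inE => /andP []. Qed.

Lemma next_facts x : valid2 x ->
  [/\ valid2 (nextr x), labr (nextr x) = (labr x + 1)%R, iter 3 nextr x = x & (nextr x).1 = x.1].
Proof.
move=> Hx; move/allP: c_next => /(_ x (V2P Hx)) /andP [/andP [/andP [H1 /eqP H2] /eqP H3] /eqP H4].
by split.
Qed.

Definition next (s : S2) : S2 := insubd s (nextr (val s)).
Definition lab (s : S2) : 'Z_3 := labr (val s).

Lemma val_next s : val (next s) = nextr (val s).
Proof. by rewrite /next insubdK //; case: (next_facts (valP s)). Qed.
Lemma val_iter k s : val (iter k next s) = iter k nextr (val s).
Proof. by elim: k => [|k IH] //=; rewrite val_next IH. Qed.
Lemma lab_next s : lab (next s) = (lab s + 1)%R.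
Proof. by rewrite /lab val_next; case: (next_facts (valP s)). Qed.
Lemma lab_iter k s : lab (iter k next s) = (lab s + k%:R)%R.
Proof.
elim: k => [|k IH] /=; first by rewrite addr0.
by rewrite lab_next IH -natr1 addrA.
Qed.
Lemma iter3 s : iter 3 next s = s.
Proof. by apply: val_inj; rewrite val_iter; case: (next_facts (valP s)). Qed.
Lemma iter_mod k s : iter k next s = iter (k %% 3) next s.
Proof.
have H : forall m t, iter (m * 3) next t = t.
  by elim => [|m IH] t //; rewrite mulSn iterD IH iter3.
by rewrite {1}(divn_eq k 3) addnC iterD H.
Qed.
Lemma pos_next s : pos2 (next s) = pos2 s.
Proof. by rewrite /pos2 val_next; case: (next_facts (valP s)). Qed.
Lemma pos_iter k s : pos2 (iter k next s) = pos2 s.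
Proof. by elim: k => [|k IH] //=; rewrite pos_next. Qed.

Lemma same_pos s t : pos2 s = pos2 t -> exists k, t = iter k next s.
Proof.
move=> H; move/allP: c_pos => /(_ _ (V2P (valP s))) /allP /(_ _ (V2P (valP t))).
rewrite /pos2 in H; rewrite H eqxx /= !inE => /orP [/eqP E|/orP [/eqP E| /eqP E]].
- by exists 0; apply: val_inj.
- by exists 1; apply: val_inj; rewrite val_iter.
- by exists 2; apply: val_inj; rewrite val_iter.
Qed.

Lemma pos_lab_inj s t : pos2 s = pos2 t -> lab s = lab t -> s = t.
Proof.
move=> H1 H2; move/allP: c_poslab => /(_ _ (V2P (valP s))) /allP /(_ _ (V2P (valP t))).
by rewrite /pos2 in H1; rewrite H1 eqxx /= /lab in H2 *; rewrite H2 eqxx /= => /eqP /val_inj.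
Qed.

Definition ref (s : S2) : S2 := iter (2 * lab s) next s.

Lemma Z3_fact (z : 'Z_3) : (z + (2 * z)%:R)%R = 0%R.
Proof. by case: z => [[|[|[|n]]] Hz] //; apply/eqP. Qed.

Lemma lab_ref s : lab (ref s) = 0%R.
Proof. by rewrite /ref lab_iter Z3_fact. Qed.
Lemma iter_ref s : iter (lab s) next (ref s) = s.
Proof.
rewrite /ref -iterD iter_mod.
have -> : (lab s + 2 * lab s) %% 3 = 0 by rewrite -mulSn modnMr.
done.
Qed.
Lemma pos_ref s : pos2 (ref s) = pos2 s.
Proof. exact: pos_iter. Qed.

Lemma comm_iter (h : {perm S2}) k s : (forall s, h (next s) = next (h s)) ->
  h (iter k next s) = iter k next (h s).
Proof. by move=> Hc; elim: k => [|k IH] //=; rewrite Hc IH. Qed.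

Lemma orbit_lab0 s t k : lab s = lab t -> t = iter k next s -> t = s.
Proof.
move=> Hl Ht; move: Hl; rewrite Ht lab_iter -{1}(addr0 (lab s)) => /addrI.
rewrite Zp_nat => /(congr1 val) /= Hk.
by rewrite iter_mod -[k %% 3]/(k %% (Zp_trunc 3).+2) -Hk.
Qed.

Definition Aset : {set S2} := [set s | lab s == 0%R].
Definition D (h : {perm S2}) : 'Z_3 := (\sum_(s in Aset) lab (h s))%R.
Definition commp (h : {perm S2}) := [forall s, h (next s) == next (h s)].

Lemma commpP h : commp h -> forall s, h (next s) = next (h s).
Proof. by move/forallP => H s; apply/eqP. Qed.

Lemma D_mul g h : commp g -> commp h -> D (g * h)%g = (D g + D h)%R.
Proof.
move=> /commpP cg /commpP ch.
pose sig s := ref (g s).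
have E : forall s, lab (h (g s)) = (lab (h (sig s)) + lab (g s))%R.
  move=> s; have -> : h (g s) = h (iter (lab (g s)) next (sig s)) by rewrite /sig iter_ref.
  by rewrite comm_iter // lab_iter natr_Zp.
have inj : {in Aset &, injective sig}.
  move=> s1 s2; rewrite !inE => /eqP H1 /eqP H2 Hs.
  have : g s2 = g (iter (lab (g s2) + 2 * lab (g s1)) next s1).
    rewrite comm_iter // iterD.
    by rewrite -/(ref (g s1)) -/(sig s1) Hs /sig iter_ref.
  move/perm_inj => E2; apply/esym; apply: orbit_lab0 E2.
  by rewrite H1 H2.
have im : sig @: Aset = Aset.
  apply/eqP; rewrite eqEcard card_in_imset // leqnn andbT.
  by apply/subsetP => x /imsetP [s _ ->]; rewrite inE lab_ref.
rewrite /D; under eq_bigr => s _ do rewrite permM E.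
rewrite big_split /= addrC; congr (_ + _)%R.
by rewrite -[in RHS]im big_imset.
Qed.

Lemma D1 : D 1%g = 0%R.
Proof. by rewrite /D big1 // => s; rewrite inE perm1 => /eqP. Qed.

Definition Hp (h : {perm S2}) := commp h && (D h == 0%R).
Lemma Hgs : group_set [set h | Hp h].
Proof.
apply: mkgs; first by rewrite /Hp D1 eqxx andbT; apply/forallP => s; rewrite !perm1.
move=> x y /andP [Cx /eqP Dx] /andP [Cy /eqP Dy]; rewrite /Hp D_mul // Dx Dy addr0 eqxx andbT.
apply/forallP => s; rewrite !permM (commpP Cx) (commpP Cy) //.
Qed.
Definition Hg := Group Hgs.

Lemma sumA (F : vec * vec -> 'Z_3) :
  (\sum_(s in Aset) F (val s))%R = (\sum_(x <- alist) F x)%R.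
Proof.
rewrite -big_enum -(big_map val xpredT).
apply: perm_big; apply: uniq_perm.
- by rewrite map_inj_uniq ?enum_uniq //; exact: val_inj.
- by case/andP: c_alist => /andP [].
move=> x; apply/idP/idP.
- case/mapP => s; rewrite mem_enum inE /lab => Hs ->.
  by move/allP: c_A => /(_ _ (V2P (valP s))); rewrite Hs.
- move=> Hx; move/allP: (proj1 (andP (proj1 (andP c_alist)))) => /(_ x Hx) /andP [Hv Hl].
  apply/mapP; exists (exist _ x Hv) => //.
  by rewrite mem_enum inE /lab.
Qed.

Lemma big_foldr (F : vec * vec -> 'Z_3) l :
  (\sum_(x <- l) F x)%R = foldr (fun x acc => F x + acc)%R 0%R l.
Proof. by elim: l => [|x l IH]; rewrite ?big_nil // big_cons IH. Qed.

Lemma move2_H n : n \in normals -> Hp (move2 n).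
Proof.
move=> Hn; apply/andP; split.
- apply/forallP => s; apply/eqP/val_inj; rewrite val_next !val_move2 // val_next.
  by move/allP: c_comm => /(_ n Hn) /allP /(_ _ (V2P (valP s))) /eqP.
- rewrite /D; under eq_bigr => s _ do rewrite /lab val_move2 //.
  rewrite (sumA (fun x => labr (turn n x))) big_foldr.
  by move/allP: c_D => /(_ n Hn).
Qed.

Lemma G2_H : G2 \subset Hg.
Proof.
rewrite /G2 gen_subG; apply/subsetP => x; rewrite !inE -!orbA.
by case/orP=> [/eqP->|/orP[/eqP->|/orP[/eqP->|/orP[/eqP->|/orP[/eqP->|/eqP->]]]]];
  apply: move2_H; rewrite !inE eqxx ?orbT.
Qed.
Lemma G2_Hp h : h \in G2 -> Hp h.
Proof. by move/(subsetP G2_H); rewrite inE. Qed.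

Definition Q2p (h : {perm S2}) := [forall s, (h (next s) == next (h s)) && (pos2 (h s) == pos2 s)].
Lemma Q2gs : group_set [set h | Q2p h].
Proof.
apply: mkgs; first by apply/forallP => s; rewrite !perm1 !eqxx.
move=> x y /forallP Hx /forallP Hy; apply/forallP => s; rewrite !permM.
case/andP: (Hx s) => /eqP -> /eqP Px; case/andP: (Hy (x s)) => /eqP -> /eqP ->.
by rewrite Px !eqxx.
Qed.
Definition Q2g := Group Q2gs.

Lemma Q2P h : Q2p h -> (forall s, h (next s) = next (h s)) /\ (forall s, pos2 (h s) = pos2 s).
Proof. by move/forallP => H; split => s; case/andP: (H s) => /eqP ? /eqP ?. Qed.

Lemma lab_mulQ g h s : Q2p g -> Q2p h -> lab s = 0%R ->
  lab ((g * h)%g s) = (lab (g s) + lab (h s))%R.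
Proof.
move=> /Q2P [cg pg] /Q2P [ch ph] Hs.
have Rs : ref (g s) = s.
  by apply: pos_lab_inj; rewrite ?pos_ref ?pg // lab_ref Hs.
have E : g s = iter (lab (g s)) next s by rewrite -{3}Rs iter_ref.
by rewrite permM {1}E comm_iter // lab_iter natr_Zp addrC.
Qed.

Lemma lab_expQ g k s : Q2p g -> lab s = 0%R -> lab ((g ^+ k)%g s) = (k%:R * lab (g s))%R.
Proof.
move=> Hg Hs; elim: k => [|k IH]; first by rewrite expg0 perm1 mul0r.
have Hk : (g ^+ k)%g \in Q2g by rewrite groupX // inE.
rewrite expgSr lab_mulQ //; last by move: Hk; rewrite inE.
by rewrite IH -natr1 mulrDl mul1r.
Qed.

Definition s0 : S2 := exist _ x0 (erefl true).
Definition alistS (k : nat) : S2 := insubd s0 (nth x0 alist k).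
Definition tw (i : nat) : {perm S3} := wordperm (nth [::] ws i).

Lemma alist_facts : [/\ forall x, x \in alist -> valid2 x /\ labr x = 0%R, uniq alist & size alist = 8].
Proof.
case/andP: c_alist => /andP [/allP H1 H2] /eqP H3; split => // x /H1 /andP [-> /eqP ->] //.
Qed.

Lemma val_alistS k : k < 8 -> val (alistS k) = nth x0 alist k.
Proof.
case: alist_facts => H1 _ H3 Hk; rewrite /alistS insubdK //.
by case: (H1 (nth x0 alist k)) => //; rewrite mem_nth // H3.
Qed.

Lemma lab_alistS k : k < 8 -> lab (alistS k) = 0%R.
Proof.
case: alist_facts => H1 _ H3 Hk; rewrite /lab val_alistS //.
by case: (H1 (nth x0 alist k)) => //; rewrite mem_nth // H3.
Qed.

Lemma ws_facts i : i < 7 -> all (fun n => n \in normals) (nth [::] ws i).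
Proof.
case/andP: c_ws => /eqP Hs /allP H Hi; apply: H; by rewrite mem_nth // Hs.
Qed.

Lemma tw_G3 i : i < 7 -> tw i \in G3.
Proof. by move=> Hi; apply: wordperm_G3; apply: ws_facts. Qed.

Lemma val_psi_tw i s : i < 7 -> val (psi (tw i) s) = rawapply (nth [::] ws i) (val s).
Proof.
move=> Hi; rewrite val_psi; last exact: G3_C3 (tw_G3 Hi).
by rewrite val_wordperm //; apply: ws_facts.
Qed.

Lemma Q2_tw i : i < 7 -> Q2p (psi (tw i)).
Proof.
move=> Hi; have Hm : nth [::] ws i \in ws by rewrite mem_nth //; case/andP: c_ws => /eqP ->.
apply/forallP => s; apply/andP; split.
- apply/eqP/val_inj; rewrite val_next !val_psi_tw // val_next.
  by move/allP: c_wsC => /(_ _ Hm) /allP /(_ _ (V2P (valP s))) /eqP.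
- rewrite /pos2 val_psi_tw //; case/andP: (valP s) => H3 Hc.
  by move/allP: c_wsL => /(_ _ Hm) /allP /(_ _ (V3P H3)); rewrite Hc.
Qed.

Lemma lab_tw i k : i < 7 -> k < 8 -> lab (psi (tw i) (alistS k)) = expected i k.
Proof.
move=> Hi Hk; rewrite /lab val_psi_tw // val_alistS //.
have := allP c_wsE i; rewrite mem_iota add0n Hi => /(_ isT) /allP /(_ k).
by rewrite mem_iota add0n Hk => /(_ isT) /eqP.
Qed.

Lemma D_alist h : D h = (\sum_(k < 8) lab (h (alistS k)))%R.
Proof.
rewrite /D (eq_bigr (fun s => lab (h (insubd s0 (val s))))) => [|s _]; last by rewrite valKd.
rewrite (sumA (fun x => lab (h (insubd s0 x)))) (big_nth x0) big_mkord.
case: alist_facts => _ _ ->; done.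
Qed.

Lemma A_alist s : lab s = 0%R -> exists2 k, k < 8 & s = alistS k.
Proof.
move=> Hs; have Hm : val s \in alist.
  by move/allP: c_A => /(_ _ (V2P (valP s))); rewrite -/(lab s) Hs eqxx.
case: alist_facts => _ _ H3.
exists (index (val s) alist); first by rewrite -H3 index_mem.
by apply: val_inj; rewrite val_alistS ?nth_index // -H3 index_mem.
Qed.

Lemma uniqQ h h' : Q2p h -> Q2p h' -> D h = D h' ->
  (forall j, j < 7 -> lab (h (alistS j)) = lab (h' (alistS j))) -> h = h'.
Proof.
move=> /Q2P [ch ph] /Q2P [ch' ph'] HD Hj.
have H8 : forall k, k < 8 -> lab (h (alistS k)) = lab (h' (alistS k)).
  move: HD; rewrite !D_alist !big_ord_recr /= !big_ord0.
  rewrite (Hj 0) // (Hj 1) // (Hj 2) // (Hj 3) // (Hj 4) // (Hj 5) // (Hj 6) // => /addrI E k.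
  by rewrite ltnS leq_eqVlt => /orP [/eqP -> //|]; apply: Hj.
have HA : forall s, lab s = 0%R -> h s = h' s.
  move=> s /A_alist [k Hk ->]; apply: pos_lab_inj; first by rewrite ph ph'.
  exact: H8.
apply/permP => t.
have E : forall f : {perm S2}, (forall s, f (next s) = next (f s)) ->
  f t = iter (lab t) next (f (ref t)).
  by move=> f cf; rewrite -comm_iter // iter_ref.
by rewrite (E h ch) (E h' ch') HA // lab_ref.
Qed.

Lemma corner_pos (s : S2) : nzeros (toZ (pos2 s)) == 0%N.
Proof. by case/andP: (valP s). Qed.

Lemma exists_st (c : CornerPos) : exists s : S2, pos2 s = val c.
Proof.
have H : valid2 (val c, dX (val c)).
  have := allP c_corner (val c, val c) (allrawP _).
  by rewrite /= (valP c).
by exists (exist (fun x => valid2 x) _ H).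
Qed.

Lemma phi_fun_val h c s : commp h -> pos2 s = val c -> val (phi_fun h c) = pos2 (h s).
Proof.
move=> /commpP ch Hs; rewrite /phi_fun; case: pickP => [s' /eqP Hs'|Hn]; last first.
  by move: (Hn s); rewrite Hs eqxx.
rewrite insubdK; last exact: corner_pos.
have [k Ek] := same_pos (etrans Hs' (esym Hs)).
by rewrite Ek comm_iter // pos_iter.
Qed.

Lemma phi_fun_inj h : commp h -> injective (phi_fun h).
Proof.
move=> Hc c d E; have ch := commpP Hc.
have [sc Hsc] := exists_st c; have [sd Hsd] := exists_st d.
have := congr1 val E; rewrite (phi_fun_val Hc Hsc) (phi_fun_val Hc Hsd) => /same_pos [k Hk].
have Esd : sd = iter k next sc by apply: (@perm_inj _ h); rewrite Hk comm_iter.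
by apply: val_inj; rewrite -Hsc -Hsd Esd pos_iter.
Qed.

Lemma phi1_Q2 h : commp h -> phi h = 1%g -> Q2p h.
Proof.
move=> Hc H1; apply/forallP => s; rewrite (forallP Hc s) /=.
pose c : CornerPos := exist _ (pos2 s) (corner_pos s).
have Ep : phi_fun h c = c.
  have : phi h c = c by rewrite H1 perm1.
  by rewrite /phi perm_insubdE //; exact: phi_fun_inj.
have := congr1 val Ep; rewrite (phi_fun_val (s := s) Hc) // => ->.
by [].
Qed.

Lemma phi_id h : (forall c, phi_fun h c = c) -> phi h = 1%g.
Proof.
move=> H; apply/permP => c; rewrite perm1 /phi perm_insubdE ?H //.
by move=> a b; rewrite !H.
Qed.

Definition L0p (g : {perm S3}) := [forall s, ~~ corner (val s) ==> (g s == s)] &&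
  [forall s, corner (val s) ==> (pos3 (g s) == pos3 s)].

Lemma L0gs : group_set [set g | L0p g].
Proof.
apply: mkgs.
  by apply/andP; split; apply/forallP => s; rewrite perm1 eqxx implybT.
move=> x y /andP [/forallP Nx /forallP Px] /andP [/forallP Ny /forallP Py].
apply/andP; split; apply/forallP => s; rewrite permM; apply/implyP => Hs.
- by rewrite (eqP (implyP (Nx s) Hs)) (implyP (Ny s) Hs).
- have E := eqP (implyP (Px s) Hs).
  have Hc : corner (val (x s)) by move: Hs; rewrite /corner -/(pos3 (x s)) -/(pos3 s) E.
  by rewrite (eqP (implyP (Py _) Hc)) E.
Qed.
Definition L0g := Group L0gs.

Lemma tw_L0 i : i < 7 -> tw i \in L0g.
Proof.
move=> Hi; rewrite inE.
have Hm : nth [::] ws i \in ws by rewrite mem_nth //; case/andP: c_ws => /eqP ->.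
have V : forall s, val (tw i s) = rawapply (nth [::] ws i) (val s).
  by move=> s; rewrite val_wordperm //; apply: ws_facts.
apply/andP; split; apply/forallP => s; apply/implyP => Hs;
  move/allP: c_wsL => /(_ _ Hm) /allP /(_ _ (V3P (valP s))).
- by rewrite (negbTE Hs) -V => /eqP E; apply/eqP/val_inj.
- by rewrite Hs /pos3 V.
Qed.

Theorem proposition3p8 :
  [/\ {in Lsub &, {morph psi : x y / (x * y)%g}},
      {in Lsub &, injective psi}
    & psi @: Lsub = Kker].
Proof.
have LG : forall g, g \in Lsub -> g \in G3 /\ L0p g by move=> g; rewrite inE => /andP [].
split.
- by move=> x y /LG [Gx _] /LG [Gy _]; exact: psiM (G3_C3 Gx) (G3_C3 Gy).
- move=> x y /LG [Gx /andP [/forallP Nx _]] /LG [Gy /andP [/forallP Ny _]] E.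
  apply/permP => s; case Hc: (corner (val s)).
  + have V : valid2 (val s) by apply/andP; split; [exact: (valP s) | exact: Hc].
    pose s2 : S2 := exist (fun x => valid2 x) _ V.
    have Es : emb s2 = s by apply: val_inj.
    apply: val_inj; rewrite -Es -!val_psi ?G3_C3 //.
    by rewrite E.
  + by rewrite (eqP (implyP (Nx s) (negbT Hc))) (eqP (implyP (Ny s) (negbT Hc))).
apply/eqP; rewrite eqEsubset; apply/andP; split; apply/subsetP.
- move=> h /imsetP [g Hg ->]; case: (LG g Hg) => Gg /andP [_ /forallP Pg].
  rewrite inE G3_psi //=; apply/eqP/phi_id => c; rewrite /phi_fun.
  case: pickP => [s /eqP Hs|] //.
  have Hcs : corner (val (emb s)) by case/andP: (valP s).
  have E1 := eqP (implyP (Pg (emb s)) Hcs); rewrite /pos3 in E1.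
  have -> : pos2 (psi g s) = val c by rewrite /pos2 val_psi ?G3_C3 // E1 /=.
  exact: valKd.
- move=> h; rewrite inE => /andP [Gh /eqP Ph].
  case/andP: (G2_Hp Gh) => Ch /eqP Dh.
  have Qh := phi1_Q2 Ch Ph.
  pose e (i : nat) := nat_of_ord (lab (h (alistS i))).
  pose g := (\prod_(i < 7) tw i ^+ e i)%g.
  have Gg : g \in G3 by apply: group_prod => i _; rewrite groupX // tw_G3.
  have Lg : g \in L0g by apply: group_prod => i _; rewrite groupX // tw_L0.
  apply/imsetP; exists g; first by rewrite inE Gg; move: Lg; rewrite inE.
  have : C3p g /\ psi g = (\prod_(i < 7) psi (tw i) ^+ e i)%g.
    apply: (big_ind2 (fun a b => C3p a /\ psi a = b)).
    - by split; [exact: C3p1 | exact: psi1].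
    - by move=> a1 b1 a2 b2 [Ca <-] [Cb <-]; split; [exact: C3pM | exact: psiM].
    - move=> i _; have Ci := G3_C3 (tw_G3 (ltn_ord i)); split; last exact: psiX.
      by apply: G3_C3; rewrite groupX // tw_G3.
  case=> _ Pg.
  have QP : Q2p (\prod_(i < 7) psi (tw i) ^+ e i)%g.
    have : (\prod_(i < 7) psi (tw i) ^+ e i)%g \in Q2g.
      by apply: group_prod => i _; rewrite groupX // inE Q2_tw.
    by rewrite inE.
  apply: uniqQ => //; first by rewrite Pg.
  - by rewrite Dh; case/andP: (G2_Hp (G3_psi Gg)) => _ /eqP ->.
  - move=> j Hj; rewrite Pg.
    have : Q2p (\prod_(i < 7) psi (tw i) ^+ e i)%g /\
      lab ((\prod_(i < 7) psi (tw i) ^+ e i)%g (alistS j)) = (\sum_(i < 7) (e i)%:R * expected i j)%R.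
      apply: (big_ind2 (fun a z => Q2p a /\ lab (a (alistS j)) = z)).
      - split; last by rewrite perm1 lab_alistS // ltnW.
        by have := group1 Q2g; rewrite inE.
      - move=> a1 b1 a2 b2 [Ca <-] [Cb <-]; split.
          have : (a1 * a2)%g \in Q2g by rewrite groupM // inE.
          by rewrite inE.
        by rewrite lab_mulQ // lab_alistS // ltnW.
      - move=> i _; split.
          have : (psi (tw i) ^+ e i)%g \in Q2g by rewrite groupX // inE Q2_tw.
          by rewrite inE.
        by rewrite lab_expQ ?Q2_tw ?lab_alistS ?lab_tw // ltnW.
    case=> _ ->.
    rewrite (bigD1 (Ordinal Hj)) //= big1 => [|i Hij].
      by rewrite /expected eqxx mulr1 addr0 natr_Zp.
    have Hne : (j == i) = false.
      apply/negbTE; move: Hij; apply: contra => /eqP E; apply/eqP/val_inj => /=.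
      by rewrite E.
    have Hn7 : (j == 7) = false by apply/negbTE; rewrite neq_ltn Hj.
    by rewrite /expected Hne Hn7 mulr0.
Qed.
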